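(* Let $(A,B)$ with $A\in\mathbb{R}^{n\times n}$, $B\in\mathbb{R}^{n\times r}$ be a controllable pair with controllability index $m$. Then for each real matrix $M\in\mathbb{R}^{n\times n}$, the pair $(M+gA,B)$ is controllable with controllability index no greater than $m$ for all but at most finitely many values of the real scalar $g$. Moreover, if $mr=n$, then $m$ is the controllability index of $(M+gA,B)$ for all but finitely many values of $g$.
   Context: The controllability index of a controllable pair $(A,B)$ is the smallest $k$ with $\mathrm{rank}[B\ AB\ \cdots\ A^{k-1}B]=n$. *)

(* Defs.v *)
From HB Require Import structures.
From mathcomp Require Import all_boot all_order all_algebra.
From mathcomp Require Import reals.
Set Implicit Arguments. Unset Strict Implicit. Unset Printing Implicit Defensive.
Import Order.TTheory GRing.Theory Num.Theory.
Local Open Scope ring_scope.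

Definition ctrb_mx (R : realType) (n r : nat) (A : 'M[R]_n) (B : 'M[R]_(n, r))
  (k : nat) : 'M[R]_(n, \sum_(j < k) r) :=
  \mxrow_(j < k) (A ^+ j *m B).

Definition controllable (R : realType) (n r : nat) (A : 'M[R]_n) (B : 'M[R]_(n, r)) : Prop :=
  exists k : nat, \rank (ctrb_mx A B k) = n.

Definition is_ctrb_index (R : realType) (n r : nat) (A : 'M[R]_n) (B : 'M[R]_(n, r))
  (m : nat) : Prop :=
  \rank (ctrb_mx A B m) = n /\ (forall k : nat, (k < m)%N -> \rank (ctrb_mx A B k) <> n).

(* Main.v *)
Require Import Defs.
From HB Require Import structures.
From mathcomp Require Import all_boot all_order all_algebra.
From mathcomp Require Import reals.
From mathcomp Require Import zify.
From Stdlib Require Import Classical.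
Set Implicit Arguments. Unset Strict Implicit. Unset Printing Implicit Defensive.
Import Order.TTheory GRing.Theory Num.Theory.
Local Open Scope ring_scope.

Definition ctrb' (K : pzRingType) (n r : nat) (A : 'M[K]_n) (B : 'M[K]_(n, r))
  (k : nat) : 'M[K]_(n, \sum_(j < k) r) :=
  \mxrow_(j < k) (A ^+ j *m B).

Lemma map_mxX (K K' : pzRingType) (f : {rmorphism K -> K'}) n (A : 'M[K]_n) j :
  map_mx f (A ^+ j) = (map_mx f A) ^+ j.
Proof.
elim: j => [|j IH]; first by rewrite !expr0; exact: map_mx1.
by rewrite !exprS -!mulmxE map_mxM IH.
Qed.

Lemma map_ctrb (K K' : pzRingType) (f : {rmorphism K -> K'}) n r
  (A : 'M[K]_n) (B : 'M[K]_(n, r)) k :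
  map_mx f (ctrb' A B k) = ctrb' (map_mx f A) (map_mx f B) k.
Proof.
rewrite /ctrb'.
have -> : map_mx f (\mxrow_(j < k) (A ^+ j *m B)) =
  \mxrow_(j < k) map_mx f (A ^+ j *m B) by apply/matrixP => i c; rewrite !mxE.
by apply: eq_mxrow => j; rewrite map_mxM map_mxX.
Qed.

Lemma poly_fin_roots (R : realType) (p : {poly R}) : p != 0 ->
  exists s : seq R, forall x, x \notin s -> p.[x] != 0.
Proof.
move: {2}(size p) (leqnn (size p)) => k; elim: k p => [|k IH] p Hs Hp.
  by move: Hs; rewrite leqn0 size_poly_eq0 (negbTE Hp).
case: (classic (exists a, root p a)) => [[a Ha]|Hn]; last first.
  exists [::] => x _; apply/negP => Hx; apply: Hn; exists x; exact: Hx.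
have [q Hq] := factor_theorem p a Ha.
have q0 : q != 0 by apply: contra Hp; move/eqP => q0; rewrite Hq q0 mul0r.
have Hsq : (size q <= k)%N.
  move: Hs; rewrite Hq size_mul // ?polyXsubC_eq0 // size_XsubC addn2 /=.
  by [].
have [s Hs'] := IH q Hsq q0.
exists (a :: s) => x; rewrite inE negb_or => /andP[xa xs].
rewrite Hq hornerM hornerXsubC mulf_neq0 ?Hs' //.
by rewrite subr_eq0.
Qed.

Lemma expZmx (R : realType) n (Y : 'M[R]_n) (g : R) j :
  (g *: Y) ^+ j = g ^+ j *: Y ^+ j.
Proof.
elim: j => [|j IH]; first by rewrite !expr0 scale1r.
by rewrite !exprS -!mulmxE IH -scalemxAl -scalemxAr scalerA -exprS.
Qed.

Lemma scale_rank (R : realType) n r (Y : 'M[R]_n) (B : 'M[R]_(n, r)) m (g : R) :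
  g != 0 -> \rank (ctrb_mx Y B m) = n -> \rank (ctrb_mx (g *: Y) B m) = n.
Proof.
move=> g0 H.
have E : ctrb_mx Y B m =
   ctrb_mx (g *: Y) B m *m \mxdiag_(j < m) (((g^-1) ^+ j)%:M : 'M[R]_r).
  rewrite /ctrb_mx mul_mxrow_mxdiag; apply: eq_mxrow => j.
  rewrite mul_mx_scalar expZmx -scalemxAl scalerA -exprMn mulVf //.
  by rewrite expr1n scale1r.
apply/eqP; rewrite eqn_leq rank_leq_row /=.
by rewrite -{1}H E mxrankM_maxl.
Qed.

Lemma key (R : realType) n r (A : 'M[R]_n) (B : 'M[R]_(n, r)) m (M : 'M[R]_n) :
  \rank (ctrb_mx A B m) = n ->
  exists s : seq R, forall g, g \notin s -> \rank (ctrb_mx (M + g *: A) B m) = n.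
Proof.
move=> H.
have fullC : row_full (ctrb_mx A B m)^T by rewrite /row_full mxrank_tr H.
set f := fullrankfun fullC.
have U := fullrowsub_unit fullC.
pose Ah : 'M[{poly R}]_n := map_mx polyC A + 'X *: map_mx polyC M.
pose Q := \det (rowsub f (ctrb' Ah (map_mx polyC B) m)^T).
have QE : forall h, Q.[h] = \det (rowsub f (ctrb_mx (A + h *: M) B m)^T).
  move=> h; rewrite /Q -horner_evalE -det_map_mx map_mxsub -map_trmx map_ctrb.
  have -> : map_mx (horner_eval h) Ah = A + h *: M.
    apply/matrixP => i j; rewrite !mxE /horner_eval.
    by rewrite hornerD hornerM hornerX !hornerC.
  have -> : map_mx (horner_eval h) (map_mx polyC B) = B.
    by apply/matrixP => i j; rewrite !mxE /horner_eval hornerC.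
  by [].
have Q0 : Q != 0.
  apply/eqP => Q0; move: (QE 0); rewrite Q0 horner0 scale0r addr0 => /esym/eqP.
  by apply/negP; rewrite -unitfE -unitmxE.
have [s Hs] := poly_fin_roots Q0.
exists (0 :: map GRing.inv s) => g; rewrite inE negb_or => /andP[g0 gs].
have hs : g^-1 \notin s.
  by apply: contra gs => Hg; rewrite -(invrK g); apply: map_f.
have Hr : \rank (ctrb_mx (A + g^-1 *: M) B m) = n.
  have := Hs _ hs; rewrite QE -unitfE -unitmxE => /mxrank_unit Hu.
  apply/eqP; rewrite eqn_leq rank_leq_row /= -mxrank_tr -{1}Hu.
  by rewrite rowsubE mxrankM_maxr.
have -> : M + g *: A = g *: (A + g^-1 *: M).
  by rewrite scalerDr scalerA mulfV // scale1r addrC.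
exact: scale_rank.
Qed.

Lemma rank_ctrb_le (R : realType) n r (A : 'M[R]_n) (B : 'M[R]_(n, r)) k :
  (\rank (ctrb_mx A B k) <= k * r)%N.
Proof.
by apply: leq_trans (rank_leq_col _) _; rewrite sum_nat_const card_ord.
Qed.

Theorem lemma4 (R : realType) (n r : nat) (A : 'M[R]_n) (B : 'M[R]_(n, r)) (m : nat) :
  controllable A B -> is_ctrb_index A B m ->
  (forall M : 'M[R]_n,
     exists s : seq R, forall g : R, g \notin s ->
       controllable (M + g *: A) B /\
       exists k : nat, (k <= m)%N /\ is_ctrb_index (M + g *: A) B k) /\
  ((m * r)%N = n ->
   forall M : 'M[R]_n,
     exists s : seq R, forall g : R, g \notin s -> is_ctrb_index (M + g *: A) B m).
Proof.
move=> _ [Hm Hmin]; split.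
- move=> M; have [s Hs] := key M Hm; exists s => g /Hs Hr; split; first by exists m.
  have ex : exists k, \rank (ctrb_mx (M + g *: A) B k) == n by exists m; apply/eqP.
  exists (ex_minn ex); case: ex_minnP => k /eqP Hk Hle.
  split; first by apply: Hle; apply/eqP.
  split => // k' Hk' /eqP H'; have := Hle _ H'; rewrite leqNgt Hk'.
  by [].
- move=> Hmr M; have [s Hs] := key M Hm; exists s => g /Hs Hr; split => // k Hk Hrk.
  have h1 := rank_ctrb_le (M + g *: A) B k.
  have h2 := rank_ctrb_le A B k.
  have h3 := Hmin k Hk.
  rewrite Hrk in h1.
  move: (\rank (ctrb_mx A B k)) h2 h3 => x h2 h3.
  nia.
Qed.
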